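(* Let $\mu$ be a locally finite positive Borel measure on $\mathbb{R}$, fix $k\in\mathbb{N}$, and fix a dyadic grid $\mathcal{D}$ in $\mathbb{R}$. Then: (1) For every $Q\in\mathcal{D}$, \[ \dim L_{Q;k}^{2}(\mu)=\dim\big(\mathrm{Range}\,\boldsymbol{M}_{Q_{\mathrm{left}},k}\cap\mathrm{Range}\,\boldsymbol{M}_{Q_{\mathrm{right}},k}\big), \] where $Q_{\mathrm{left}},Q_{\mathrm{right}}$ are the left and right halves of $Q$. In particular, $\dim L_{Q;k}^{2}(\mu)=k$ for all $Q\in\mathcal{D}$ if and only if $\boldsymbol{M}_{Q,k}\succ0$ (positive definite) for all $Q\in\mathcal{D}$. (2) If $\boldsymbol{M}_{Q,k}\succ0$ for all $Q\in\mathcal{D}$, then for each $Q\in\mathcal{D}$ one can choose an orthonormal basis $\{a_{Q}^{\mu,\ell}\}_{\ell=1}^{k}$ of $L_{Q;k}^{2}(\mu)$ (orthonormal in $L^{2}(\mu)$) such that, in addition to $\int a_{Q}^{\mu,\ell}(x)x^{i}d\mu(x)=0$ for $0\le i\le k-1$, the following additional moment conditions hold: \[ \int a_{Q}^{\mu,\ell}(x)\,x^{i}\,d\mu(x)=0\qquad\text{for all }2\le\ell\le k\text{ and }k\le i\le k+\ell-2 . \]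
   Context: For a dyadic interval $Q$, $Q_{\mathrm{left}}$ and $Q_{\mathrm{right}}$ are its two dyadic halves. $L_{Q;k}^{2}(\mu)$ is the subspace of $L^{2}(\mu)$ consisting of functions $f=\mathbf{1}_{Q_{\mathrm{left}}}p+\mathbf{1}_{Q_{\mathrm{right}}}q$ with $p,q$ real polynomials of degree at most $k-1$ such that $\int_{Q}f(x)x^{i}d\mu(x)=0$ for $0\le i\le k-1$. For an interval $J$, $\boldsymbol{M}_{J,k}$ is the $k\times k$ matrix of moments with entries $(\boldsymbol{M}_{J,k})_{ij}=\int_{J}x^{i+j}d\mu(x)$, $0\le i,j\le k-1$, i.e. $\boldsymbol{M}_{J,k}=\int_J V_k(x)V_k(x)^{\mathrm{tr}}d\mu(x)$ with $V_k(x)=(1,x,\dots,x^{k-1})^{\mathrm{tr}}$. *)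

(* Defs.v *)
From HB Require Import structures.
From mathcomp Require Import all_boot all_order all_algebra.
From mathcomp Require Import all_classical all_reals all_analysis.
Set Implicit Arguments. Unset Strict Implicit. Unset Printing Implicit Defensive.
Import Order.TTheory GRing.Theory Num.Theory.
Local Open Scope classical_set_scope.
Local Open Scope ring_scope.

Section Defs.
Variable R : realType.

Definition dlen (n : int) : R := (2%:R : R) ^ (- n).

Definition hoi (a b : R) : set R := [set x | a <= x < b].

(* A dyadic interval Q is encoded by its left endpoint a and level n:
   Q = [a, a + 2^(-n)).  Its two dyadic halves: *)
Definition dyI (Q : R * int) : set R := hoi Q.1 (Q.1 + dlen Q.2).
Definition dyLeft (Q : R * int) : set R := hoi Q.1 (Q.1 + dlen (Q.2 + 1)).
Definition dyRight (Q : R * int) : set R :=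
  hoi (Q.1 + dlen (Q.2 + 1)) (Q.1 + dlen Q.2).

Definition dyadic_grid (D : set (R * int)) : Prop :=
  (forall (n : int) (x : R),
     exists a, [/\ D (a, n), x \in dyI (a, n) &
                forall b, D (b, n) -> x \in dyI (b, n) -> b = a]) /\
  (forall a n, D (a, n) -> D (a, n + 1) /\ D (a + dlen (n + 1), n + 1)).

Definition locally_finite (mu : {measure set R -> \bar R}) : Prop :=
  forall a b : R, (mu [set x : R | (a <= x <= b)%R] < +oo)%E.

Definition moment_mx (mu : {measure set R -> \bar R}) (J : set R) (k : nat)
  : 'M[R]_k :=
  \matrix_(i < k, j < k) fine (\int[mu]_(x in J) ((x ^+ (i + j))%:E))%E.

Definition posdef (k : nat) (M : 'M[R]_k) : Prop :=
  forall v : 'cV[R]_k, v != 0 -> 0 < (v^T *m M *m v) 0 0.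

Definition in_LQk (mu : {measure set R -> \bar R}) (Q : R * int) (k : nat)
  (f : R -> R) : Prop :=
  (exists p q : {poly R}, [/\ (size p <= k)%N, (size q <= k)%N &
     f = fun x => \1_(dyLeft Q) x * p.[x] + \1_(dyRight Q) x * q.[x]]) /\
  forall i : nat, (i < k)%N ->
    (\int[mu]_(x in dyI Q) ((f x * x ^+ i)%:E) = 0)%E.

(* dim L^2_{Q;k}(mu) = d, as a subspace of L^2(mu) (functions identified
   when equal mu-a.e.): there is a family of d elements of the subspace that
   is linearly independent in L^2(mu) and spans the subspace in L^2(mu). *)
Definition dim_LQk (mu : {measure set R -> \bar R}) (Q : R * int) (k : nat)
  (d : nat) : Prop :=
  exists b : 'I_d -> R -> R,
    [/\ forall l, in_LQk mu Q k (b l),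
        forall c : 'I_d -> R,
          {ae mu, forall x, \sum_(l < d) c l * b l x = 0} -> forall l, c l = 0
      & forall f, in_LQk mu Q k f ->
          exists c : 'I_d -> R,
            {ae mu, forall x, f x = \sum_(l < d) c l * b l x}].

End Defs.

(* Main.v *)
Require Import Defs.
From HB Require Import structures.
From mathcomp Require Import all_boot all_order all_algebra.
From mathcomp Require Import all_classical all_reals all_analysis.
From mathcomp Require Import ring lra zify measurable_realfun.
Import Order.TTheory GRing.Theory Num.Theory.
Local Open Scope classical_set_scope.
Local Open Scope ring_scope.

Section Flag.
Variable R : realType.
Variable n : nat.
Variable G : 'M[R]_n.
Hypothesis Gsym : G^T = G.
Hypothesis Gpos : forall u : 'rV_n, u != 0 -> 0 < (u *m G *m u^T) 0 0.
Variable h : nat -> 'cV[R]_n.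

Definition bf (u v : 'rV[R]_n) := (u *m G *m v^T) 0 0.

Lemma bf_sym u v : bf u v = bf v u.
Proof.
rewrite /bf; have -> : (u *m G *m v^T) 0 0 = ((u *m G *m v^T)^T) 0 0 by rewrite [RHS]mxE.
by rewrite !trmx_mul trmxK Gsym mulmxA.
Qed.

Lemma trZ m (a : R) (u : 'M[R]_(m, n)) : (a *: u)^T = a *: u^T.
Proof. by apply/matrixP => i j; rewrite !mxE. Qed.

Lemma bfZl a u v : bf (a *: u) v = a * bf u v.
Proof. by rewrite /bf -!scalemxAl mxE. Qed.

Lemma bfZr a u v : bf u (a *: v) = a * bf u v.
Proof. by rewrite /bf trZ -!scalemxAr mxE. Qed.

Lemma ker_nz m p (C : 'M[R]_(m, p)) : (\rank C < m)%N ->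
  exists u : 'rV_m, u != 0 /\ u *m C = 0.
Proof.
move=> rC; set K := kermx C.
have K0 : K != 0.
  apply/negP => /eqP K0; have := mxrank_ker C; rewrite -/K K0 mxrank0; move: rC; lia.
have [i Ki] : exists i, row i K != 0.
  apply/existsP; move: K0; apply: contraNT; rewrite negb_exists => /forallP H.
  by apply/eqP/row_matrixP => j; rewrite row0; apply/eqP; move: (H j); rewrite negbK.
by exists (row i K); split => //; rewrite -row_mul mulmx_ker row0.
Qed.

Lemma flag_step m : (m <= n)%N ->
  exists e : nat -> 'rV[R]_n,
   (forall l1 l2, (n - m <= l1 < n)%N -> (n - m <= l2 < n)%N ->
      bf (e l1) (e l2) = (l1 == l2)%:R) /\
   (forall l j, (n - m <= l < n)%N -> (j < l)%N -> (e l *m h j) 0 0 = 0).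
Proof.
elim: m => [_|m IH mn].
  by exists (fun _ => 0); split => [l1 l2|l j]; rewrite subn0 => /andP[h1 h2]; move: h1 h2; lia.
have [e [eo em]] := IH (ltnW mn).
set L := (n - m.+1)%N.
have hL : (L + 1 + m = n)%N by rewrite /L; lia.
have hn1 : (m + L = n.-1)%N by rewrite /L; lia.
set C := \matrix_(i < n, c < n.-1)
  (if (c < m)%N then (G *m (e (L + 1 + c)%N)^T) i 0 else h (c - m)%N i 0).
have [u [u0 uC]] : exists u : 'rV_n, u != 0 /\ u *m C = 0.
  apply: ker_nz; apply: leq_ltn_trans (rank_leq_col C) _; move: mn; lia.
have uCc (c : 'I_n.-1) : (u *m C) 0 c = 0 by rewrite uC mxE.
have s0 := Gpos u u0; set s := (u *m G *m u^T) 0 0 in s0.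
set u' := (Num.sqrt s)^-1 *: u.
have sq0 : 0 < Num.sqrt s by rewrite sqrtr_gt0.
have u'1 : bf u' u' = 1.
  rewrite /u' bfZl bfZr -/(bf u u) /bf -/s mulrA -expr2 exprVn sqr_sqrtr ?ltW //.
  by rewrite mulVf // gt_eqF.
have u'o t : (m > t)%N -> bf u' (e (L + 1 + t)%N) = 0.
  move=> tm; rewrite /u' bfZl; apply/eqP; rewrite mulf_eq0; apply/orP; right.
  have tn : (t < n.-1)%N by lia.
  have := uCc (Ordinal tn).
  rewrite !mxE => hh; move: hh.
  under eq_bigr => i _ do rewrite mxE /= tm.
  move=> hh; apply/eqP; rewrite -[RHS]hh /bf -mulmxA mxE.
  by apply: eq_bigr => i _; rewrite mxE.
have u'h j : (j < L)%N -> (u' *m h j) 0 0 = 0.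
  move=> jL; rewrite /u' -scalemxAl mxE; apply/eqP; rewrite mulf_eq0; apply/orP; right.
  have tn : (m + j < n.-1)%N by lia.
  have tm : (m + j < m)%N = false by lia.
  have := uCc (Ordinal tn).
  rewrite !mxE => hh; move: hh.
  under eq_bigr => i _ do rewrite mxE /= tm addKn.
  by move=> ->.
exists (fun t => if t == L then u' else e t); split.
- move=> l1 l2 h1 h2.
  have gen : forall t, (L < t < n)%N -> bf u' (e t) = 0.
    move=> t /andP[t1 t2]; have -> : t = (L + 1 + (t - L - 1))%N by lia.
    apply: u'o; lia.
  case: eqP => e1; case: eqP => e2.
  + by rewrite e1 e2 u'1 eqxx.
  + rewrite gen; last by lia.
    by case: eqP => //; lia.
  + rewrite bf_sym gen; last by lia.
    by case: eqP => //; lia.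
  + apply: eo; lia.
- move=> l j h1 jl; case: eqP => e1.
    by apply: u'h; lia.
  by apply: em => //; lia.
Qed.

Lemma flag : exists e : nat -> 'rV[R]_n,
   (forall l1 l2, (l1 < n)%N -> (l2 < n)%N -> bf (e l1) (e l2) = (l1 == l2)%:R) /\
   (forall l j, (l < n)%N -> (j < l)%N -> (e l *m h j) 0 0 = 0).
Proof.
have [e [h1 h2]] := @flag_step n (leqnn n); exists e; split.
- by move=> l1 l2 a1 a2; apply: h1; rewrite subnn.
- by move=> l j a1 a2; apply: h2 => //; rewrite subnn.
Qed.
End Flag.

Section S.
Variable R : realType.
Variable mu : {measure set R -> \bar R}.
Hypothesis hmu : locally_finite mu.

Lemma hoi_measurable (a b : R) : measurable (hoi a b).
Proof.
have -> : hoi a b = [set` `[a, b[%R].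
  by apply/seteqP; split => x /=; rewrite in_itv.
exact: measurable_itv.
Qed.

Lemma hoi_fin (a b : R) : (mu (hoi a b) < +oo)%E.
Proof.
apply: le_lt_trans (hmu a b); apply: le_measure; rewrite ?inE.
- exact: hoi_measurable.
- have -> : [set x : R | a <= x <= b] = [set` `[a, b]%R].
    by apply/seteqP; split => x /=; rewrite in_itv.
  exact: measurable_itv.
- by move=> x /= /andP[-> /ltW].
Qed.

Lemma mono_int (a b : R) n :
  mu.-integrable (hoi a b) (fun x => (x ^+ n)%:E).
Proof.
apply: (measurable_bounded_integrable (f := fun x : R => x ^+ n)).
- exact: hoi_measurable.
- exact: hoi_fin.
- exact: measurable_realfun.exprn_measurable.
exists ((`|a| + `|b|) ^+ n); split; first by rewrite num_real.
move=> r Cr x /= /andP[ax xb].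
apply: (le_trans _ (ltW Cr)).
rewrite normrX; apply: lerXn2r; rewrite ?nnegrE ?addr_ge0 //.
have := ler_norm b; have := normr_ge0 a; have := normr_ge0 b.
have := ler_norm (- a); rewrite normrN.
have [x0|x0] := leP 0 x.
- rewrite ger0_norm //; move: xb ax; lra.
- rewrite ltr0_norm //; move: xb ax; lra.
Qed.

Definition mom (J : set R) (n : nat) : R := fine (\int[mu]_(x in J) (x ^+ n)%:E)%E.

Lemma mom_sum (a b : R) (T : finType) (c : T -> R) (m : T -> nat) :
  (\int[mu]_(x in hoi a b) (\sum_t c t * x ^+ m t)%:E =
   (\sum_t c t * mom (hoi a b) (m t))%:E)%E.
Proof.
under eq_integral do rewrite -sumEFin.
rewrite integral_sum //; last first.
  by move=> t; under eq_fun do rewrite EFinM; apply: integrableZl; [exact: hoi_measurable|exact: mono_int].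
  exact: hoi_measurable.
rewrite -sumEFin; apply: eq_bigr => t _.
under eq_integral do rewrite EFinM.
rewrite integralZl; [|exact: hoi_measurable|exact: mono_int].
rewrite /mom EFinM fineK // ; apply: integrable_fin_num; [exact: hoi_measurable|exact: mono_int].
Qed.

Variable k : nat.
Definition ev (p : 'rV[R]_k) (x : R) : R := \sum_(i < k) p 0 i * x ^+ i.
Definition colm (J : set R) (n : nat) : 'cV[R]_k := \col_i mom J (i + n).

Lemma mom_ev a b (p : 'rV[R]_k) n :
  (\int[mu]_(x in hoi a b) (ev p x * x ^+ n)%:E =
   ((p *m colm (hoi a b) n) 0 0)%:E)%E.
Proof.
under eq_integral do rewrite /ev mulr_suml.
under eq_integral => x _ do under eq_bigr => i _ do rewrite -mulrA -exprD.
rewrite (mom_sum a b _ (fun i : 'I_k => p 0 i) (fun i : 'I_k => (i + n)%N)).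
by rewrite !mxE; congr (_%:E); apply: eq_bigr => i _; rewrite !mxE.
Qed.

Lemma moment_mxE J (i j : 'I_k) : moment_mx mu J k i j = mom J (i + j).
Proof. by rewrite mxE. Qed.

Lemma gram_ev a b (p q : 'rV[R]_k) :
  (\int[mu]_(x in hoi a b) (ev p x * ev q x)%:E =
   ((p *m moment_mx mu (hoi a b) k *m q^T) 0 0)%:E)%E.
Proof.
under eq_integral do rewrite /ev mulr_suml.
under eq_integral => x _ do under eq_bigr => i _ do rewrite mulr_sumr.
under eq_integral => x _ do under eq_bigr => i _ do under eq_bigr => j _ do
  rewrite mulrACA -exprD.
under eq_integral => x _ do rewrite pair_bigA /=.
rewrite (mom_sum a b _ (fun ij : 'I_k * 'I_k => p 0 ij.1 * q 0 ij.2)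
   (fun ij : 'I_k * 'I_k => (ij.1 + ij.2)%N)).
congr (_%:E); rewrite -(pair_bigA _ (fun i j : 'I_k => p 0 i * q 0 j * mom (hoi a b) (i + j))) /= !mxE exchange_big /=.
apply: eq_bigr => j _; rewrite !mxE mulr_suml; apply: eq_bigr => i _.
by rewrite !mxE mulrAC.
Qed.

Lemma ev_measurable (p : 'rV[R]_k) D : measurable_fun D (ev p).
Proof.
rewrite /ev; apply: measurable_sum => i.
apply: (measurable_realfun.measurable_funM (f := cst (p 0 i))); first exact: measurable_cst.
exact: measurable_realfun.exprn_measurable.
Qed.

Lemma pM_colm J (p : 'rV[R]_k) (j : 'I_k) :
  (p *m moment_mx mu J k) 0 j = (p *m colm J j) 0 0.
Proof. by rewrite !mxE; apply: eq_bigr => i _; rewrite !mxE. Qed.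

Lemma aeJ a b (p : 'rV[R]_k) :
  (p *m moment_mx mu (hoi a b) k *m p^T) 0 0 = 0 ->
  {ae mu, forall x, hoi a b x -> ev p x = 0}.
Proof.
move=> h0.
have mf : measurable_fun (hoi a b) (EFin \o (fun x => ev p x * ev p x)).
  apply/measurable_EFinP; apply: measurable_realfun.measurable_funM; exact: ev_measurable.
have := (ae_eq_integral_abs mu (hoi_measurable a b) mf).1.
rewrite /ae_eq => H.
have : \forall x \ae mu, hoi a b x -> (ev p x * ev p x)%:E = 0%E.
  apply: H; transitivity (\int[mu]_(x in hoi a b) (ev p x * ev p x)%:E)%E.
    by apply: eq_integral => x _ /=; rewrite ger0_norm // -expr2 sqr_ge0.
  by rewrite gram_ev h0.
apply: filterS => x hx Jx; have := hx Jx => /= [[]] /eqP.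
by rewrite mulf_eq0 orbb => /eqP.
Qed.

Lemma aeJinv a b (p : 'rV[R]_k) :
  {ae mu, forall x, hoi a b x -> ev p x = 0} ->
  p *m moment_mx mu (hoi a b) k = 0.
Proof.
move=> hae; apply/rowP => j; rewrite pM_colm [RHS]mxE.
have := mom_ev a b p j.
rewrite (ae_eq_integral (cst 0%E)).
- by rewrite integral0 => -[] <-.
- exact: hoi_measurable.
- apply/measurable_EFinP; apply: measurable_realfun.measurable_funM; [exact: ev_measurable|exact: measurable_realfun.exprn_measurable].
- exact: measurable_cst.
- by apply: filterS hae => x hx Jx; rewrite hx // mul0r.
Qed.

Lemma dlen_gt0 (n : int) : 0 < dlen R n.
Proof. by rewrite /dlen exprz_gt0. Qed.

Lemma dlenS (n : int) : dlen R n = dlen R (n + 1) + dlen R (n + 1).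
Proof.
rewrite /dlen.
have t0 : (2%:R : R) != 0 by rewrite pnatr_eq0.
have -> : (- n = - (n + 1) + 1)%R by rewrite opprD addrNK.
rewrite expfzDr // expr1z; ring.
Qed.

Lemma dyI_U (Q : R * int) : dyI Q = dyLeft Q `|` dyRight Q.
Proof.
have h0 := dlen_gt0 (Q.2 + 1); have h1 := dlenS Q.2.
rewrite /dyI /dyLeft /dyRight /hoi; apply/seteqP; split => x /=.
- move=> /andP[ax xb]; have [xl|xl] := ltP x (Q.1 + dlen R (Q.2 + 1)).
  + by left; apply/andP; split; lra.
  + by right; apply/andP; split; lra.
- case=> /andP[ax xb]; apply/andP; split; lra.
Qed.

Lemma dyLR_disj (Q : R * int) x : dyLeft Q x -> dyRight Q x -> False.
Proof. rewrite /dyLeft /dyRight /hoi /= => /andP[_ h1] /andP[h2 _]; lra. Qed.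

Lemma dyL_I (Q : R * int) x : dyLeft Q x -> dyI Q x.
Proof. by rewrite dyI_U; left. Qed.
Lemma dyR_I (Q : R * int) x : dyRight Q x -> dyI Q x.
Proof. by rewrite dyI_U; right. Qed.

Lemma split_int (Q : R * int) (g1 g2 : R -> R) :
  measurable_fun setT g1 -> measurable_fun setT g2 ->
  (\int[mu]_(x in dyI Q) (\1_(dyLeft Q) x * g1 x + \1_(dyRight Q) x * g2 x)%:E =
   \int[mu]_(x in dyLeft Q) (g1 x)%:E + \int[mu]_(x in dyRight Q) (g2 x)%:E)%E.
Proof.
move=> m1 m2; rewrite dyI_U integral_setU.
- congr (_ + _)%E; apply: eq_integral => x /set_mem xi; rewrite !indicE.
  + rewrite (mem_set xi) memNset ?mul1r ?mul0r ?addr0 //.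
    by move=> xr; apply: dyLR_disj xi xr.
  + rewrite (mem_set xi) memNset ?mul1r ?mul0r ?add0r //.
    by move=> xl; apply: dyLR_disj xl xi.
- exact: hoi_measurable.
- exact: hoi_measurable.
- apply/measurable_EFinP; apply: measurable_funD; apply: measurable_funM;
    by [apply: measurable_indic; exact: hoi_measurable | exact: measurable_funTS].
- by apply/disj_setPS => x [xl xr]; apply: dyLR_disj xl xr.
Qed.

Lemma whole_int (Q : R * int) (g1 g2 : R -> R) :
  measurable_fun setT g1 -> measurable_fun setT g2 ->
  (\int[mu]_x (\1_(dyLeft Q) x * g1 x + \1_(dyRight Q) x * g2 x)%:E =
   \int[mu]_(x in dyLeft Q) (g1 x)%:E + \int[mu]_(x in dyRight Q) (g2 x)%:E)%E.
Proof.
move=> m1 m2; rewrite -split_int // (integral_mkcond (dyI Q)).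
apply: eq_integral => x _; rewrite patchE; case: ifPn => // xI.
rewrite !indicE !memNset ?mul0r ?addr0 //.
- by move=> h; move/negP: xI; apply; apply/mem_set/dyR_I.
- by move=> h; move/negP: xI; apply; apply/mem_set/dyL_I.
Qed.

Definition Fv (Q : R * int) (p q : 'rV[R]_k) (x : R) : R :=
  \1_(dyLeft Q) x * ev p x + \1_(dyRight Q) x * ev q x.

Lemma mxn_measurable (p : 'rV[R]_k) n : measurable_fun setT (fun x => ev p x * x ^+ n).
Proof.
by apply: measurable_funM; [exact: ev_measurable|exact: measurable_realfun.exprn_measurable].
Qed.

Lemma mom_Fv (Q : R * int) (p q : 'rV[R]_k) n :
  (\int[mu]_(x in dyI Q) (Fv Q p q x * x ^+ n)%:E =
   ((p *m colm (dyLeft Q) n + q *m colm (dyRight Q) n) 0 0)%:E)%E.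
Proof.
under eq_integral do rewrite /Fv mulrDl -!mulrA.
rewrite split_int; try exact: mxn_measurable.
by rewrite /dyLeft /dyRight !mom_ev -EFinD !mxE.
Qed.

Lemma momT_Fv (Q : R * int) (p q : 'rV[R]_k) n :
  (\int[mu]_x (Fv Q p q x * x ^+ n)%:E =
   ((p *m colm (dyLeft Q) n + q *m colm (dyRight Q) n) 0 0)%:E)%E.
Proof.
under eq_integral do rewrite /Fv mulrDl -!mulrA.
rewrite whole_int; try exact: mxn_measurable.
by rewrite /dyLeft /dyRight !mom_ev -EFinD !mxE.
Qed.

Lemma gram_Fv (Q : R * int) (p q p' q' : 'rV[R]_k) :
  (\int[mu]_x (Fv Q p q x * Fv Q p' q' x)%:E =
   ((p *m moment_mx mu (dyLeft Q) k *m p'^T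
     + q *m moment_mx mu (dyRight Q) k *m q'^T) 0 0)%:E)%E.
Proof.
have -> : (fun x => (Fv Q p q x * Fv Q p' q' x)%:E) =
  (fun x => (\1_(dyLeft Q) x * (ev p x * ev p' x) +
             \1_(dyRight Q) x * (ev q x * ev q' x))%:E).
  apply/funext => x; congr (_%:E); rewrite /Fv !indicE.
  case: (boolP (x \in dyLeft Q)) => hl; case: (boolP (x \in dyRight Q)) => hr.
  - by exfalso; apply: dyLR_disj (set_mem hl) (set_mem hr).
  - by rewrite !(mul1r, mul0r, addr0).
  - by rewrite !(mul1r, mul0r, add0r).
  - by rewrite !(mul1r, mul0r, add0r).
rewrite whole_int; try by apply: measurable_funM; exact: ev_measurable.
by rewrite /dyLeft /dyRight !gram_ev -EFinD !mxE.
Qed.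

Lemma Fv_ae0 (Q : R * int) (p q : 'rV[R]_k) :
  p *m moment_mx mu (dyLeft Q) k = 0 -> q *m moment_mx mu (dyRight Q) k = 0 ->
  {ae mu, forall x, Fv Q p q x = 0}.
Proof.
move=> hp hq.
have ap : {ae mu, forall x, dyLeft Q x -> ev p x = 0}.
  by apply: aeJ; rewrite /dyLeft in hp *; rewrite hp mul0mx mxE.
have aq : {ae mu, forall x, dyRight Q x -> ev q x = 0}.
  by apply: aeJ; rewrite /dyRight in hq *; rewrite hq mul0mx mxE.
apply: filterS2 ap aq => x hp' hq'; rewrite /Fv !indicE.
case: (boolP (x \in dyLeft Q)) => hl.
  rewrite (hp' (set_mem hl)) memNset ?mulr0 ?mul0r ?addr0 //.
  by move=> hr; apply: dyLR_disj (set_mem hl) hr.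
case: (boolP (x \in dyRight Q)) => hr.
  by rewrite (hq' (set_mem hr)) !mulr0 mul0r addr0.
by rewrite !mul0r addr0.
Qed.

Lemma Fv_ae_inv (Q : R * int) (p q : 'rV[R]_k) :
  {ae mu, forall x, Fv Q p q x = 0} ->
  p *m moment_mx mu (dyLeft Q) k = 0 /\ q *m moment_mx mu (dyRight Q) k = 0.
Proof.
move=> h; split; apply: aeJinv; apply: filterS h => x hx Jx; move: hx; rewrite /Fv !indicE.
- rewrite (mem_set Jx) memNset; last by move=> hr; apply: dyLR_disj Jx hr.
  by rewrite mul1r mul0r addr0.
- rewrite (mem_set Jx) memNset; last by move=> hl; apply: dyLR_disj hl Jx.
  by rewrite mul1r mul0r add0r.
Qed.

Lemma ev_lin d (c : 'rV[R]_d) (P : 'M[R]_(d, k)) x :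
  ev (c *m P) x = \sum_(l < d) c 0 l * ev (row l P) x.
Proof.
rewrite /ev; under eq_bigr do rewrite mxE mulr_suml.
rewrite exchange_big; apply: eq_bigr => l _; rewrite mulr_sumr.
by apply: eq_bigr => i _; rewrite mxE mulrA.
Qed.

Lemma Fv_lin (Q : R * int) d (c : 'rV[R]_d) (P Pq : 'M[R]_(d, k)) x :
  \sum_(l < d) c 0 l * Fv Q (row l P) (row l Pq) x = Fv Q (c *m P) (c *m Pq) x.
Proof.
rewrite /Fv !ev_lin !mulr_sumr -big_split; apply: eq_bigr => l _ /=.
by rewrite mulrDr !mulrA [c 0 l * _]mulrC [c 0 l * \1_(dyRight Q) x]mulrC.
Qed.

Lemma ev_sub (p p' : 'rV[R]_k) x : ev (p - p') x = ev p x - ev p' x.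
Proof.
rewrite /ev -sumrB; apply: eq_bigr => i _; by rewrite !mxE mulrBl.
Qed.

Lemma Fv_sub (Q : R * int) (p q p' q' : 'rV[R]_k) x :
  Fv Q (p - p') (q - q') x = Fv Q p q x - Fv Q p' q' x.
Proof. rewrite /Fv !ev_sub; ring. Qed.

Lemma moment_sym J : (moment_mx mu J k)^T = moment_mx mu J k.
Proof. by apply/matrixP => i j; rewrite !mxE addnC. Qed.

Lemma in_LQk_Fv (Q : R * int) (p q : 'rV[R]_k) :
  p *m moment_mx mu (dyLeft Q) k + q *m moment_mx mu (dyRight Q) k = 0 ->
  in_LQk mu Q k (Fv Q p q).
Proof.
move=> h; split.
  exists (\poly_(i < k) \sum_(j < k | (j : nat) == i) p 0 j),
         (\poly_(i < k) \sum_(j < k | (j : nat) == i) q 0 j); split; try exact: size_poly.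
  apply/funext => x; rewrite /Fv !horner_poly /ev.
  by congr (_ * _ + _ * _); apply: eq_bigr => i _; rewrite (big_pred1 i) // => j; exact: val_eqE.
move=> i ik; rewrite mom_Fv mxE.
have := congr1 (fun M : 'rV[R]_k => M 0 (Ordinal ik)) h.
by rewrite /= [LHS]mxE !pM_colm [RHS]mxE => ->.
Qed.

Lemma in_LQk_inv (Q : R * int) f : in_LQk mu Q k f ->
  exists p q : 'rV[R]_k, f = Fv Q p q /\
  p *m moment_mx mu (dyLeft Q) k + q *m moment_mx mu (dyRight Q) k = 0.
Proof.
move=> [[p0 [q0 [sp sq fE]]] hm].
have fE' : f = Fv Q (\row_(i < k) p0`_i) (\row_(i < k) q0`_i).
  rewrite fE; apply/funext => x; rewrite /Fv /ev (horner_coef_wide x sp) (horner_coef_wide x sq).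
  by congr (_ * _ + _ * _); apply: eq_bigr => i _; rewrite mxE.
rewrite fE' in hm.
exists (\row_(i < k) p0`_i), (\row_(i < k) q0`_i); split => //.
apply/rowP => j; rewrite [LHS]mxE [RHS]mxE !pM_colm.
have := hm j (ltn_ord j).
rewrite mom_Fv => -[].
by rewrite !mxE.
Qed.

Lemma part1 (Q : R * int) :
  dim_LQk mu Q k (\rank ((moment_mx mu (dyLeft Q) k)^T
                     :&: (moment_mx mu (dyRight Q) k)^T)%MS).
Proof.
rewrite !moment_sym.
set A := moment_mx mu (dyLeft Q) k; set B := moment_mx mu (dyRight Q) k.
set Z := row_base (A :&: B)%MS.
have ZA : (Z <= A)%MS by rewrite eq_row_base capmxSl.
have ZB : (Z <= B)%MS by rewrite eq_row_base capmxSr.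
set P := Z *m pinvmx A; set Pq := - (Z *m pinvmx B).
have PA : P *m A = Z by rewrite mulmxKpV.
have PB : Pq *m B = - Z by rewrite mulNmx mulmxKpV.
exists (fun l => Fv Q (row l P) (row l Pq)); split.
- move=> l; apply: in_LQk_Fv.
  by rewrite -!row_mul PA PB; apply/rowP => i; rewrite !mxE addrN.
- move=> c hc l.
  have hc' : {ae mu, forall x, Fv Q (\row_l c l *m P) (\row_l c l *m Pq) x = 0}.
    apply: filterS hc => x hx; rewrite -Fv_lin -[RHS]hx.
    by apply: eq_bigr => i _; rewrite mxE.
  have [h1 _] := Fv_ae_inv _ _ _ hc'.
  move: h1; rewrite -mulmxA PA => /eqP; rewrite mulmx_free_eq0 ?row_base_free //.
  by move=> /eqP /rowP /(_ l); rewrite !mxE.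
- move=> f /in_LQk_inv [p [q [-> hpq]]].
  set w := p *m A.
  have wq : w = - (q *m B) by apply/eqP; rewrite -addr_eq0 hpq.
  have wZ : (w <= Z)%MS.
    by rewrite eq_row_base sub_capmx submxMl wq -mulNmx submxMl.
  set cv := w *m pinvmx Z.
  have cZ : cv *m Z = w by rewrite mulmxKpV.
  exists (fun l => cv 0 l).
  apply: filterS (Fv_ae0 Q (p - cv *m P) (q - cv *m Pq) _ _).
  + move=> x hx; rewrite Fv_lin; apply/eqP; rewrite -subr_eq0 -Fv_sub; exact/eqP.
  + by rewrite mulmxBl -mulmxA PA cZ subrr.
  + by rewrite mulmxBl -mulmxA PB mulmxN cZ wq opprK addrN.
Qed.

Lemma children (D : set (R * int)) (Q : R * int) : dyadic_grid D -> D Q ->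
  exists Q1 Q2, [/\ D Q1, D Q2, dyI Q1 = dyLeft Q & dyI Q2 = dyRight Q].
Proof.
case: Q => a n [_ g2] DQ; have [h1 h2] := g2 a n DQ.
exists (a, n + 1), (a + dlen R (n + 1), n + 1); split => //.
rewrite /dyI /dyRight /= (dlenS n) addrA //.
Qed.

Lemma parent (D : set (R * int)) (Q : R * int) : dyadic_grid D -> D Q ->
  exists Q', D Q' /\ (dyI Q = dyLeft Q' \/ dyI Q = dyRight Q').
Proof.
case: Q => a n [g1 g2] DQ.
have [a' [Da' ain uniq']] := g1 (n - 1) a.
have [c1 c2] := g2 a' (n - 1) Da'; rewrite subrK in c1 c2.
have hn := dlenS (n - 1); rewrite subrK in hn.
have h0 := dlen_gt0 n.
have aI : a \in dyI (a, n).
  by apply/mem_set; rewrite /dyI /hoi /=; apply/andP; split; lra.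
move: ain; rewrite /dyI /hoi /= => /set_mem /= /andP[a1 a2].
have [g0 [Dg0 ging uq]] := g1 n a.
have ea : a = g0 by apply: uq.
exists (a', n - 1); split => //.
have [al|ar] := ltP a (a' + dlen R n).
- left.
  have : a' = g0.
    apply: uq => //; apply/mem_set; rewrite /dyI /hoi /=; apply/andP; split; lra.
  move=> e; rewrite /dyI /dyLeft /= subrK -e in ea *; by rewrite ea.
- right.
  have : a' + dlen R n = g0.
    apply: uq => //; apply/mem_set; rewrite /dyI /hoi /=; apply/andP; split; lra.
  move=> e; rewrite /dyI /dyRight /= subrK -e in ea *; rewrite ea hn.
  by rewrite addrA.
Qed.

Lemma gram_ge0 a b (p : 'rV[R]_k) :
  0 <= (p *m moment_mx mu (hoi a b) k *m p^T) 0 0.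
Proof.
have := gram_ev a b p p; rewrite -lee_fin => <-.
by apply: integral_ge0 => x _; rewrite lee_fin -expr2 sqr_ge0.
Qed.

Lemma full_posdef a b : row_free (moment_mx mu (hoi a b) k) ->
  posdef (moment_mx mu (hoi a b) k).
Proof.
move=> hf v v0; rewrite lt_neqAle.
have := gram_ge0 a b v^T; rewrite trmxK => -> ; rewrite andbT.
apply/eqP => /esym h.
have h' : (v^T *m moment_mx mu (hoi a b) k *m v^T^T) 0 0 = 0 by rewrite trmxK.
have := aeJinv a b v^T (aeJ a b v^T h') => /eqP.
rewrite mulmx_free_eq0 // => /eqP /(congr1 trmx); rewrite trmxK trmx0 => v0'.
by move: v0; rewrite v0' eqxx.
Qed.

Lemma posdef_free J : posdef (moment_mx mu J k) -> row_free (moment_mx mu J k).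
Proof.
move=> hp; apply: inj_row_free => u hu; apply/eqP; apply/negP => /negP u0.
have := hp u^T; rewrite trmx_eq0 => /(_ u0); rewrite trmxK hu mul0mx mxE ltxx.
done.
Qed.

Lemma dim_lb (Q : R * int) (d d' : nat) : dim_LQk mu Q k d -> dim_LQk mu Q k d' ->
  (d <= d')%N.
Proof.
move=> [b' [inb' indb' _]] [b [_ _ spb]].
have [C hC] := choice (fun m => spb _ (inb' m)).
set Cm := \matrix_(m < d, l < d') C m l.
rewrite leqNgt; apply/negP => dd.
set K := kermx Cm.
have K0 : K != 0.
  apply/negP => /eqP K0; have := mxrank_ker Cm; rewrite -/K K0 mxrank0.
  have := rank_leq_col Cm; move: dd; lia.
have [i Ki] : exists i, row i K != 0.
  apply/existsP; move: K0; apply: contraNT; rewrite negb_exists => /forallP H.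
  by apply/eqP/row_matrixP => j; rewrite row0; apply/eqP; move: (H j); rewrite negbK.
set w := row i K.
have wC : w *m Cm = 0 by rewrite /w -row_mul mulmx_ker row0.
have ae_all : \forall x \ae mu, forall m, b' m x = \sum_(l < d') C m l * b l x.
  by apply: filter_forall => m; exact: hC.
have : forall m, w 0 m = 0.
  apply: indb'; apply: filterS ae_all => x hx.
  under eq_bigr => m _ do rewrite (hx m) big_distrr.
  rewrite exchange_big big1 // => l _.
  transitivity ((\sum_m w 0 m * C m l) * b l x).
    by rewrite big_distrl /=; apply: eq_bigr => m _; rewrite mulrA.
  have := congr1 (fun M : 'rV[R]_d' => M 0 l) wC; rewrite /= !mxE => e.
  rewrite -[RHS](mul0r (b l x)); congr (_ * _); rewrite -[RHS]e.
  by apply: eq_bigr => m _; rewrite ?mxE.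
move=> w0; move: Ki; rewrite -/w; suff -> : w = 0 by rewrite eqxx.
by apply/rowP => m; rewrite w0 mxE.
Qed.

Lemma iff_part (D : set (R * int)) : dyadic_grid D ->
  ((forall Q, D Q -> dim_LQk mu Q k k) <->
   (forall Q, D Q -> posdef (moment_mx mu (dyI Q) k))).
Proof.
move=> gD; split.
- move=> hd Q DQ.
  have [Q' [DQ' hQ]] := parent D Q gD DQ.
  have lb := dim_lb Q' _ _ (hd Q' DQ') (part1 Q').
  rewrite !moment_sym in lb.
  set A := moment_mx mu (dyLeft Q') k in lb; set B := moment_mx mu (dyRight Q') k in lb.
  have rA : (\rank A <= k)%N by exact: rank_leq_col.
  have rB : (\rank B <= k)%N by exact: rank_leq_col.
  have cA : (\rank (A :&: B) <= \rank A)%N by apply: mxrankS; exact: capmxSl.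
  have cB : (\rank (A :&: B) <= \rank B)%N by apply: mxrankS; exact: capmxSr.
  case: hQ => ->.
  + apply: full_posdef; rewrite /row_free -/A; apply/eqP; lia.
  + apply: full_posdef; rewrite /row_free -/B; apply/eqP; lia.
- move=> hp Q DQ.
  have [Q1 [Q2 [D1 D2 e1 e2]]] := children D Q gD DQ.
  have fA := posdef_free _ (hp Q1 D1); have fB := posdef_free _ (hp Q2 D2).
  rewrite e1 in fA; rewrite e2 in fB.
  have := part1 Q; rewrite !moment_sym.
  have -> : \rank (moment_mx mu (dyLeft Q) k :&: moment_mx mu (dyRight Q) k)%MS = k.
    rewrite capmxT; last by rewrite row_full_unit -row_free_unit.
    by apply/eqP; exact: fA.
  done.
Qed.

Lemma trD m p (X Y : 'M[R]_(m, p)) : (X + Y)^T = X^T + Y^T.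
Proof. by apply/matrixP => i j; rewrite !mxE. Qed.
Lemma trN m p (X : 'M[R]_(m, p)) : (- X)^T = - X^T.
Proof. by apply/matrixP => i j; rewrite !mxE. Qed.

Lemma part2 (Q : R * int) :
  posdef (moment_mx mu (dyLeft Q) k) -> posdef (moment_mx mu (dyRight Q) k) ->
  exists a : 'I_k -> R -> R,
    [/\ forall l, in_LQk mu Q k (a l),
        forall l m, (\int[mu]_x ((a l x * a m x)%:E) = (l == m)%:R%:E)%E,
        forall f, in_LQk mu Q k f ->
          exists c : 'I_k -> R,
            {ae mu, forall x, f x = \sum_(l < k) c l * a l x}
      & forall (l : 'I_k) (i : nat),
          (2 <= l.+1)%N -> (k <= i <= k + l.+1 - 2)%N ->
          (\int[mu]_x ((a l x * x ^+ i)%:E) = 0)%E].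
Proof.
move=> pA pB.
have uA : moment_mx mu (dyLeft Q) k \in unitmx by rewrite -row_free_unit; exact: posdef_free.
have uB : moment_mx mu (dyRight Q) k \in unitmx by rewrite -row_free_unit; exact: posdef_free.
set A := moment_mx mu (dyLeft Q) k in pA uA *; set B := moment_mx mu (dyRight Q) k in pB uB *.
have sA : A^T = A by exact: moment_sym.
have sB : B^T = B by exact: moment_sym.
set Ai := invmx A; set Bi := invmx B.
set G := Ai *m A *m Ai^T + Bi *m B *m Bi^T.
have Gsym : G^T = G.
  by rewrite /G trD !trmx_mul !trmxK sA sB !mulmxA.
have Gexp u v : (u *m G *m v^T) = (u *m Ai) *m A *m (v *m Ai)^T + (u *m Bi) *m B *m (v *m Bi)^T.
  by rewrite /G mulmxDr mulmxDl !trmx_mul !mulmxA.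
have Gpos : forall u : 'rV_k, u != 0 -> 0 < (u *m G *m u^T) 0 0.
  move=> u u0; rewrite Gexp mxE.
  have uAi0 : u *m Ai != 0.
    apply: contra u0 => /eqP h0; apply/eqP.
    by rewrite -(mulmxKV uA u) -/Ai h0 mul0mx.
  have := pA (u *m Ai)^T; rewrite trmx_eq0 trmxK => /(_ uAi0) h1.
  have h2 := gram_ge0 (Q.1 + dlen R (Q.2 + 1)) (Q.1 + dlen R Q.2) (u *m Bi).
  by apply: (lt_le_trans h1); rewrite lerDl; exact: h2.
set h := fun j : nat => Ai *m colm (dyLeft Q) (k + j) - Bi *m colm (dyRight Q) (k + j).
have [e [eo em]] := @flag R k G Gsym Gpos h.
exists (fun l : 'I_k => Fv Q (e l *m Ai) (- (e l *m Bi))); split.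
- move=> l; apply: in_LQk_Fv.
  by rewrite mulNmx !mulmxKV // addrN.
- move=> l m; rewrite gram_Fv -/A -/B.
  have -> : (e l *m Ai *m A *m (e m *m Ai)^T + - (e l *m Bi) *m B *m (- (e m *m Bi))^T)
     = e l *m G *m (e m)^T.
    by rewrite Gexp trN mulNmx mulmxN mulNmx opprK.
  by have := eo l m (ltn_ord l) (ltn_ord m); rewrite /bf => ->; rewrite val_eqE.
- move=> f /in_LQk_inv [p [q [-> hpq]]].
  set E : 'M[R]_k := \matrix_(l < k, j < k) e l 0 j.
  have rE l : row l E = e l by apply/rowP => j; rewrite !mxE.
  have bfl v w : bf R k G (v *m E) w = \sum_l v 0 l * bf R k G (e l) w.
    rewrite mulmx_sum_row /bf mulmx_suml mulmx_suml summxE; apply: eq_bigr => l _.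
    by rewrite rE -!scalemxAl mxE.
  have uE : E \in unitmx.
    rewrite -row_free_unit; apply: inj_row_free => v hv; apply/rowP => m.
    have := bfl v (e m); rewrite hv.
    have -> : bf R k G 0 (e m) = 0 by rewrite /bf !mul0mx mxE.
    move=> /esym.
    rewrite (bigD1 m) //= eo // eqxx mulr1 big1 ?addr0 => [-> |]; first by rewrite mxE.
    move=> l lm; rewrite eo //.
    have -> : (val l == val m) = false by rewrite val_eqE (negbTE lm).
    by rewrite mulr0.
  set u := p *m A; set c := u *m invmx E.
  have cE : c *m E = u by rewrite mulmxKV.
  have rN l (X : 'M[R]_k) : row l (- X) = - row l X by apply/rowP => j; rewrite !mxE.
  exists (fun l => c 0 l); apply: aeW => x.
  have -> : \sum_(l < k) c 0 l * Fv Q (e l *m Ai) (- (e l *m Bi)) x =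
            Fv Q (c *m (E *m Ai)) (c *m (- (E *m Bi))) x.
    rewrite -Fv_lin; apply: eq_bigr => l _; by rewrite rN !row_mul rE.
  have -> : c *m (E *m Ai) = p by rewrite mulmxA cE /u mulmxK.
  have uq : u = - (q *m B) by apply/eqP; rewrite -addr_eq0 hpq.
  have -> : c *m (- (E *m Bi)) = q by rewrite mulmxN mulmxA cE uq mulNmx mulmxK ?opprK.
  by [].
- move=> l i l2 /andP[ki ik].
  set j := (i - k)%N.
  have ij : i = (k + j)%N by rewrite /j; lia.
  have jl : (j < l)%N by rewrite /j; lia.
  rewrite ij momT_Fv.
  have := em l j (ltn_ord l) jl; rewrite /h => h0.
  congr (_%:E); rewrite -[RHS]h0 mulmxBr !mulmxA mulNmx.
  by [].
Qed.
End S.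

Theorem theorem2 (R : realType) (mu : {measure set R -> \bar R}) (k : nat)
  (D : set (R * int)) :
  locally_finite mu -> dyadic_grid D ->
  [/\ (forall Q, D Q ->
         dim_LQk mu Q k
           (\rank ((moment_mx mu (dyLeft Q) k)^T
                     :&: (moment_mx mu (dyRight Q) k)^T)%MS)),
      ((forall Q, D Q -> dim_LQk mu Q k k) <->
       (forall Q, D Q -> posdef (moment_mx mu (dyI Q) k)))
    & ((forall Q, D Q -> posdef (moment_mx mu (dyI Q) k)) ->
       forall Q, D Q ->
       exists a : 'I_k -> R -> R,
         [/\ forall l, in_LQk mu Q k (a l),
             forall l m, (\int[mu]_x ((a l x * a m x)%:E) = (l == m)%:R%:E)%E,
             forall f, in_LQk mu Q k f ->
               exists c : 'I_k -> R,
                 {ae mu, forall x, f x = \sum_(l < k) c l * a l x}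
           & forall (l : 'I_k) (i : nat),
               (2 <= l.+1)%N -> (k <= i <= k + l.+1 - 2)%N ->
               (\int[mu]_x ((a l x * x ^+ i)%:E) = 0)%E])].
Proof.
move=> hmu gD; split.
- by move=> Q _; exact: (part1 _ _ hmu k Q).
- exact: (iff_part _ _ hmu k _ gD).
- move=> hp Q DQ.
  have [Q1 [Q2 [D1 D2 e1 e2]]] := children _ D Q gD DQ.
  apply: (part2 _ _ hmu k Q).
  + by have := hp Q1 D1; rewrite e1.
  + by have := hp Q2 D2; rewrite e2.
Qed.
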